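(* Let $\Xi$ be a system. If $\Xi$ has a patchwork solution, then $\Xi$ is solvable.
   Context: A system $\Xi$ is a bipartite graph (undirected, simple) whose vertices are coloured ''pairs'' and ''triples'', together with a set of links $\lambda=(\tau,S)$, where $\tau$ is a triple (the tip) and $S$ is a set of pairs adjacent to $\tau$ (the base vertices; the edges $\{\tau,\pi\}$, $\pi\in S$, are the legs of $\lambda$), and a weight $\mu_\lambda\in\mathbb C^\times$ for each link. The support of $\lambda$ is the subgraph with vertices $S\cup\{\tau\}$ and edges $\{\tau,\pi\}$, $\pi\in S$. A subsystem is a subgraph together with a subset of the links whose support lies in the subgraph (same weights); it is full if it contains all edges of $\Xi$ between its vertices and all links of $\Xi$ supported in it. An edge $\{\tau,\pi\}$ is simply linked if $(\tau,\{\pi\})$ is a link and the edge is a leg of no other link. A solution of a system is an orientation of all its edges such that (S1) every triple has exactly one edge oriented away from it, and that edge is simply linked; (S2) every pair has at most one edge oriented towards it; (S3) there is no oriented cycle. A system is solvable if it has a solution. A patch of $\Xi$ is a full subsystem $\Xi'$ that contains the base vertices of every link of $\Xi$ having a leg in $\Xi'$. A patchwork for $\Xi$ is a family $\{\Xi_k\}_{k\in I}$ of patches indexed by a partially ordered set $I$ such that (P1) every vertex of $\Xi$ lies in some $\Xi_k$; (P2) for $k\ne l$, $\Xi_k$ and $\Xi_l$ have no triple in common; (P3) if $\tau$ is a triple in $\Xi_l$ and $\{\tau,\pi\}$ is an edge of $\Xi$, then $\pi$ is a pair of $\Xi_k$ for some $k\le l$. A patchwork solution is a patchwork together with a solution of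 each patch $\Xi_k$ such that (PS) if $\pi$ is a pair in $\Xi_k\cap\Xi_l$ and some edge $\{\tau,\pi\}$ of $\Xi_k$ is oriented towards $\pi$, then $k\le l$. *)

(* Defs.v *)
From mathcomp Require Import all_boot.
Set Implicit Arguments. Unset Strict Implicit. Unset Printing Implicit Defensive.

(* A system on a finite vertex type V.
   - [triple v] : v is coloured "triple"; otherwise v is a "pair".
   - [edge] : adjacency relation of the (simple, undirected, bipartite) graph.
   - [links] : the set of links (tau, S); weights are omitted. *)
Record system (V : finType) := System {
  triple : pred V;
  edge : rel V;
  links : {set V * {set V}}
}.

Definition pair (V : finType) (X : system V) (v : V) : bool := ~~ triple X v.

Definition wf_system (V : finType) (X : system V) : Prop :=
  [/\ symmetric (edge X), irreflexive (edge X),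
      (forall x y, edge X x y -> triple X x != triple X y) &
      (forall tau S, (tau, S) \in links X ->
         triple X tau /\ (forall p, p \in S -> pair X p /\ edge X tau p))].

(* Full subsystems are determined by their vertex set W: they consist of all
   edges of X between vertices of W and all links of X supported in W. *)
Definition link_in (V : finType) (X : system V) (W : {set V}) (l : V * {set V}) : bool :=
  [&& l \in links X, l.1 \in W & l.2 \subset W].

Definition edge_in (V : finType) (X : system V) (W : {set V}) (x y : V) : bool :=
  [&& x \in W, y \in W & edge X x y].

Definition patch (V : finType) (X : system V) (W : {set V}) : Prop :=
  forall tau S p, (tau, S) \in links X -> p \in S -> edge_in X W tau p ->
    S \subset W.

(* An orientation of the edges of the full subsystem W: [a x y] means that the
   edge {x,y} is oriented from x to y. *)
Definition orientation (V : finType) (X : system V) (W : {set V}) (a : rel V) : Prop :=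
  (forall x y, a x y -> edge_in X W x y) /\
  (forall x y, edge_in X W x y -> (a x y || a y x) /\ ~~ (a x y && a y x)).

Definition simply_linked (V : finType) (X : system V) (W : {set V}) (tau p : V) : Prop :=
  edge_in X W tau p /\ link_in X W (tau, [set p]) /\
  (forall S, link_in X W (tau, S) -> p \in S -> S = [set p]).

Definition solution (V : finType) (X : system V) (W : {set V}) (a : rel V) : Prop :=
  [/\ orientation X W a,
      (forall tau, tau \in W -> triple X tau ->
         exists p, [/\ a tau p, simply_linked X W tau p &
                      forall q, a tau q -> q = p]),
      (forall p, p \in W -> pair X p -> #|[set x | a x p]| <= 1) &
      (forall x y, a x y -> ~~ connect a y x)].

Definition solvable (V : finType) (X : system V) : Prop :=
  exists a : rel V, solution X [set: V] a.

Definition partial_order (I : Type) (le : I -> I -> Prop) : Prop :=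
  [/\ forall k, le k k,
      (forall k l, le k l -> le l k -> k = l) &
      (forall k l m, le k l -> le l m -> le k m)].

Definition patchwork (V : finType) (X : system V) (I : Type)
    (le : I -> I -> Prop) (P : I -> {set V}) : Prop :=
  [/\ partial_order le,
      (forall k, patch X (P k)),
      (forall v, exists k, v \in P k),
      (forall k l v, k <> l -> triple X v -> v \in P k -> v \in P l -> False) &
      (forall l tau p, triple X tau -> tau \in P l -> edge X tau p ->
         exists k, le k l /\ pair X p /\ p \in P k)].

Definition patchwork_solution (V : finType) (X : system V) (I : Type)
    (le : I -> I -> Prop) (P : I -> {set V}) (a : I -> rel V) : Prop :=
  [/\ patchwork X le P,
      (forall k, solution X (P k) (a k)) &
      (forall k l p tau, pair X p -> p \in P k -> p \in P l ->
         a k tau p -> le k l)].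

Definition has_patchwork_solution (V : finType) (X : system V) : Prop :=
  exists (I : Type) (le : I -> I -> Prop) (P : I -> {set V}) (a : I -> rel V),
    patchwork_solution X le P a.

(* Main.v *)
Require Import Defs.
From mathcomp Require Import all_boot.
From Stdlib Require Import ClassicalEpsilon.

Theorem proposition2p32 (V : finType) (X : system V) :
  wf_system X -> has_patchwork_solution X -> solvable X.
Proof.
move=> [esym eirr ebip wlinks] [I [le [P [a [[[lerefl leanti letrans] Ppatch P1 P2 P3] Psol PS]]]]].
have [idx idxP] : {idx : V -> I | forall v, v \in P (idx v)}.
  by exists (fun v => proj1_sig (constructive_indefinite_description _ (P1 v)));
     move=> v; exact: (proj2_sig (constructive_indefinite_description _ (P1 v))).
have tyF : forall x y, edge X x y -> triple X x -> triple X y = false.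
  by move=> x y exy tx; move: (ebip _ _ exy); rewrite tx; case: (triple X y).
have tyT : forall x y, edge X x y -> ~~ triple X x -> triple X y.
  by move=> x y exy tx; move: (ebip _ _ exy); rewrite (negbTE tx); case: (triple X y).
pose A : rel V := fun x y => edge X x y &&
  (if triple X x then (y \in P (idx x)) && a (idx x) x y
   else (x \in P (idx y)) ==> a (idx y) x y).
pose Inv l v := if triple X v then le l (idx v)
  else exists m t, [/\ le l m, v \in P m & a m t v].
have step : forall l x y, Inv l x -> A x y -> Inv l y.
  move=> l x y; rewrite /Inv /A => Hx /andP[exy].
  case: (boolP (triple X x)) => tx.
    move=> /andP[yP axy]; rewrite (tyF _ _ exy tx) /=.
    by rewrite tx in Hx; exists (idx x), x; split.
  move=> _; rewrite (tyT _ _ exy tx) /=.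
  rewrite (negbTE tx) in Hx; case: Hx => m [t [lm xm amt]].
  have eyx : edge X y x by rewrite esym.
  have [k [lk [px xk]]] := P3 (idx y) y x (tyT _ _ exy tx) (idxP y) eyx.
  exact: letrans lm (letrans _ _ _ (PS m k x t px xm xk amt) lk).
have conn : forall l x y, Inv l x -> connect A x y -> Inv l y.
  move=> l x y Hx /connectP[p pth ->].
  elim: p x Hx pth => //= z p IH x Hx /andP[axz pth].
  exact: IH (step _ _ _ Hx axz) pth.
have inP : forall tau v, triple X tau -> connect A tau v -> connect A v tau ->
    v \in P (idx tau) /\ (triple X v -> idx v = idx tau).
  move=> tau v tt ctv cvt.
  have I0 : Inv (idx tau) tau by rewrite /Inv tt; apply: lerefl.
  have := conn _ _ _ I0 ctv; rewrite /Inv.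
  case: (boolP (triple X v)) => tv.
    move=> le1.
    have Iv : Inv (idx v) v by rewrite /Inv tv; apply: lerefl.
    have := conn _ _ _ Iv cvt; rewrite /Inv tt => le2.
    have e := leanti _ _ le1 le2.
    by rewrite e; split; [exact: idxP | done].
  case=> m [t [lm vm amt]].
  have Iv : Inv m v by rewrite /Inv (negbTE tv); exists m, t; split => //; apply: lerefl.
  have := conn _ _ _ Iv cvt; rewrite /Inv tt => ml.
  by rewrite (leanti _ _ lm ml); split.
have edgeL : forall tau x y, triple X tau -> connect A tau x -> connect A x tau ->
    connect A tau y -> connect A y tau -> A x y -> a (idx tau) x y.
  move=> tau x y tt ctx cxt cty cyt.
  have [xP xI] := inP _ _ tt ctx cxt; have [yP yI] := inP _ _ tt cty cyt.
  rewrite /A => /andP[exy].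
  case: (boolP (triple X x)) => tx.
    by rewrite (xI tx) => /andP[_ ->].
  by rewrite (yI (tyT _ _ exy tx)) xP.
exists A; split.
- split.
    by move=> x y /andP[exy _]; rewrite /edge_in !in_setT.
  have key : forall t p, triple X t -> edge X t p ->
      (A t p || A p t) && ~~ (A t p && A p t).
    move=> t p tt etp.
    have ept : edge X p t by rewrite esym.
    rewrite /A etp ept tt (tyF _ _ etp tt) /=.
    case pP: (p \in P (idx t)) => /=.
      have [[_ Or] _ _ _] := Psol (idx t).
      have := Or t p; rewrite /edge_in pP idxP etp => /(_ isT) [o1 o2].
      by rewrite o1.
    by [].
  move=> x y /and3P[_ _ exy].
  case: (boolP (triple X x)) => tx.
    by have /andP[-> ->] := key _ _ tx exy.
  have ty := tyT _ _ exy tx.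
  have eyx : edge X y x by rewrite esym.
  by have /andP[h1 h2] := key _ _ ty eyx; rewrite orbC h1 andbC h2.
- move=> tau _ tt.
  have [_ S1 _ _] := Psol (idx tau).
  have [p [atp [ein [lin SL]] uq]] := S1 tau (idxP tau) tt.
  have /and3P[_ pP etp] := ein.
  exists p; split.
  + by rewrite /A etp tt pP atp.
  + split; first by rewrite /edge_in !in_setT.
    split.
      by move: lin; rewrite /link_in => /and3P[-> _ _]; rewrite in_setT subsetT.
    move=> S /and3P[lS _ _] pS; apply: SL => //.
    rewrite /link_in lS idxP /=.
    exact: (Ppatch (idx tau) tau S p lS pS ein).
  + by move=> q /andP[_]; rewrite tt => /andP[_ /uq].
- move=> p _ pp.
  apply/card_le1_eqP => x1 x2; rewrite !inE => A1 A2.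
  have get : forall x, A x p -> triple X x /\ (p \in P (idx x)) && a (idx x) x p.
    move=> x /andP[exp]; have tx : triple X x.
      by move: (ebip _ _ exp); rewrite (negbTE pp); case: (triple X x).
    by rewrite tx.
  have [t1 /andP[p1 a1]] := get _ A1; have [t2 /andP[p2 a2]] := get _ A2.
  have e := leanti _ _ (PS _ _ _ _ pp p1 p2 a1) (PS _ _ _ _ pp p2 p1 a2).
  have [_ _ S2 _] := Psol (idx x1).
  move/card_le1_eqP: (S2 p p1 pp); apply; rewrite inE //.
  by rewrite e.
- move=> x y Axy; apply/negP => cyx.
  have [tau [tt ctx cyt]] : exists tau, [/\ triple X tau, connect A tau x & connect A y tau].
    case tx: (triple X x).
      by exists x; split; rewrite ?connect0.
    exists y; split; rewrite ?connect0 //.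
    by move: Axy => /andP[exy _]; apply: (tyT _ _ exy); rewrite tx.
  have cxt := connect_trans (connect1 Axy) cyt.
  have cty := connect_trans ctx (connect1 Axy).
  have axy := edgeL _ _ _ tt ctx cxt cty cyt Axy.
  have lift : forall u q, connect A tau u -> path A u q -> connect A (last u q) tau ->
      path (a (idx tau)) u q.
    move=> u q; elim: q u => //= w q IH u ctu /andP[auw pth] cl.
    have ctw := connect_trans ctu (connect1 auw).
    have cwl : connect A w (last w q) by apply/connectP; exists q.
    have cwt := connect_trans cwl cl.
    have cut := connect_trans (connect1 auw) cwt.
    by rewrite (edgeL _ _ _ tt ctu cut ctw cwt auw) /= IH.
  move: cyx => /connectP [q pth ex].
  have cl : connect A (last y q) tau by rewrite -ex.
  have pth' := lift y q cty pth cl.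
  have [_ _ _ S3] := Psol (idx tau).
  by move: (S3 _ _ axy); rewrite (_ : connect _ _ _ = true) //; apply/connectP; exists q.
Qed.
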